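(* Let $\mathbb{R}^n_s$ be $\mathbb{R}^n$ with a non-degenerate symmetric bilinear form $\langle\cdot,\cdot\rangle$ of signature $(n-s,s)$, let $G\subset\mathrm{Iso}(\mathbb{R}^n_s)$ be a real Zariski-closed subgroup whose centralizer in $\mathrm{Iso}(\mathbb{R}^n_s)$ acts transitively on $\mathbb{R}^n$, and let $\mathfrak{g}$ be its Lie algebra with the symmetric bilinear form $(\cdot,\cdot)$ induced by the orbit metric. If $X,Y\in\mathfrak{g}$ and $Z=[X,Y]$, then $Z$ is orthogonal with respect to $(\cdot,\cdot)$ to $\mathrm{span}\{X,Y,Z\}$.
   Context: Elements of $\mathfrak{g}$ are written $(A,v)$ (matrices $\begin{pmatrix}A&v\\0&0\end{pmatrix}$). For fixed $p\in\mathbb{R}^n$, the orbit metric form on $\mathfrak{g}$ is $(X,Y)=\langle A_Xp+v_X,\,A_Yp+v_Y\rangle$, i.e. the pullback of $\langle\cdot,\cdot\rangle$ on the orbit $G.p$ via the orbit map; it satisfies $([X,Y],Z)=-(Y,[X,Z])$, and $\mathfrak{g}$ is 2-step nilpotent. *)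

(* Defs.v *)
From HB Require Import structures.
From mathcomp Require Import all_boot all_order all_algebra.
From mathcomp Require Import all_classical all_reals all_analysis.
Set Implicit Arguments. Unset Strict Implicit. Unset Printing Implicit Defensive.
Import Order.TTheory GRing.Theory Num.Theory.
Local Open Scope ring_scope.

Section Defs.
Variables (R : realType) (n : nat).

(* Affine maps x |-> A x + v of R^n, i.e. matrices [A v; 0 1]. *)
Definition aff := ('M[R]_n * 'cV[R]_n)%type.

Definition aff_id : aff := (1%:M, 0).
Definition aff_mul (g h : aff) : aff := (g.1 *m h.1, g.1 *m h.2 + g.2).
Definition aff_act (g : aff) (x : 'cV[R]_n) : 'cV[R]_n := g.1 *m x + g.2.

Definition bform (S : 'M[R]_n) (x y : 'cV[R]_n) : R := (x^T *m S *m y) 0 0.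

Definition signature_form (S : 'M[R]_n) (s : nat) : Prop :=
  (s <= n)%N /\ S^T = S /\
  exists P : 'M[R]_n, P \in unitmx /\
    P^T *m S *m P = diag_mx (\row_(i < n) if (i < n - s)%N then 1 else -1).

Definition iso (S : 'M[R]_n) (g : aff) : Prop := g.1^T *m S *m g.1 = S.

Inductive polyfun : (aff -> R) -> Prop :=
| pf_const c : polyfun (fun _ => c)
| pf_coordA i j : polyfun (fun g => g.1 i j)
| pf_coordv i : polyfun (fun g => g.2 i 0)
| pf_add f h : polyfun f -> polyfun h -> polyfun (fun g => f g + h g)
| pf_mul f h : polyfun f -> polyfun h -> polyfun (fun g => f g * h g).

Definition zariski_closed (G : aff -> Prop) : Prop :=
  exists F : (aff -> R) -> Prop, (forall f, F f -> polyfun f) /\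
    forall g, G g <-> (forall f, F f -> f g = 0).

Definition subgroup_of_iso (S : 'M[R]_n) (G : aff -> Prop) : Prop :=
  (forall g, G g -> iso S g) /\ G aff_id /\
  (forall g h, G g -> G h -> G (aff_mul g h)) /\
  (forall g, G g -> exists h, G h /\ aff_mul g h = aff_id /\ aff_mul h g = aff_id).

Definition centralizer_transitive (S : 'M[R]_n) (G : aff -> Prop) : Prop :=
  forall x y : 'cV[R]_n, exists h, iso S h /\
    (forall g, G g -> aff_mul h g = aff_mul g h) /\ aff_act h x = y.

(* Lie algebra of G: the tangent space at the identity, i.e. velocities
   (at t = 0) of curves in G through the identity. Elements (X, u) stand
   for the matrices [X u; 0 0]. *)
Definition lie_alg (G : aff -> Prop) (X : aff) : Prop :=
  exists c : R -> aff, (forall t, G (c t)) /\ c 0 = aff_id /\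
    (forall i j, is_derive (0 : R) (1 : R) (fun t => (c t).1 i j) (X.1 i j)) /\
    (forall i, is_derive (0 : R) (1 : R) (fun t => (c t).2 i 0) (X.2 i 0)).

(* Lie bracket (commutator of the (n+1)x(n+1) matrices) *)
Definition lie_bracket (X Y : aff) : aff :=
  (X.1 *m Y.1 - Y.1 *m X.1, X.1 *m Y.2 - Y.1 *m X.2).

Definition aff_add (X Y : aff) : aff := (X.1 + Y.1, X.2 + Y.2).
Definition aff_scale (a : R) (X : aff) : aff := (a *: X.1, a *: X.2).

Definition orbit_form (S : 'M[R]_n) (p : 'cV[R]_n) (X Y : aff) : R :=
  bform S (aff_act X p) (aff_act Y p).

End Defs.

(* Main.v *)
Require Import Defs.
From HB Require Import structures.
From mathcomp Require Import all_boot all_order all_algebra.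
From mathcomp Require Import all_classical all_reals all_analysis.
From mathcomp Require Import ring lra.
Set Implicit Arguments. Unset Strict Implicit. Unset Printing Implicit Defensive.
Import Order.TTheory GRing.Theory Num.Theory.
Local Open Scope ring_scope.

Section Der.
Variable R : realType.

Definition mder m k (M : R -> 'M[R]_(m,k)) (D : 'M[R]_(m,k)) :=
  forall i j, is_derive (0:R) (1:R) (fun t => M t i j) (D i j).

Lemma mder_cst m k (A : 'M[R]_(m,k)) : mder (fun _ => A) 0.
Proof. move=> i j; rewrite mxE; exact: is_derive_cst. Qed.

Lemma mder_add m k (M N : R -> 'M[R]_(m,k)) D E :
  mder M D -> mder N E -> mder (fun t => M t + N t) (D + E).
Proof.
move=> hM hN i j; rewrite mxE.
have -> : (fun t => (M t + N t) i j) = (fun t => M t i j) + (fun t => N t i j).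
  by apply/funext => t; rewrite mxE.
exact: is_deriveD.
Qed.

Lemma mder_tr m k (M : R -> 'M[R]_(m,k)) D : mder M D -> mder (fun t => (M t)^T) D^T.
Proof.
move=> hM i j; rewrite mxE.
have -> : (fun t => (M t)^T i j) = (fun t => M t j i).
  by apply/funext => t; rewrite mxE.
exact: hM.
Qed.

Lemma mder_mul m k l (M : R -> 'M[R]_(m,k)) (N : R -> 'M[R]_(k,l)) D E :
  mder M D -> mder N E -> mder (fun t => M t *m N t) (D *m N 0 + M 0 *m E).
Proof.
move=> hM hN i j.
have -> : (fun t => (M t *m N t) i j) = \sum_(q < k) (fun t => M t i q * N t q j).
  by apply/funext => t; rewrite mxE fct_sumE.
apply: is_derive_eq.
  apply: is_derive_sum => q.
  exact: (is_deriveM (hM i q) (hN q j)).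
have -> : (D *m N 0 + M 0 *m E) i j = (D *m N 0) i j + (M 0 *m E) i j.
  by rewrite [LHS]mxE.
rewrite !mxE -big_split /=; apply: eq_bigr => q _.
by rewrite /GRing.scale /= addrC mulrC [N 0 q j * _]mulrC.
Qed.

Lemma mder_uniq m k (M : R -> 'M[R]_(m,k)) D D' : mder M D -> mder M D' -> D = D'.
Proof.
move=> h1 h2; apply/matrixP => i j.
by rewrite -(@derive_val _ _ _ _ _ _ _ (h1 i j)) (@derive_val _ _ _ _ _ _ _ (h2 i j)).
Qed.

Lemma mder_ext m k (M N : R -> 'M[R]_(m,k)) D : (forall t, M t = N t) -> mder M D -> mder N D.
Proof. by move=> e; have -> : M = N by apply/funext. Qed.

End Der.

Section Lie.
Variables (R : realType) (n : nat).

Lemma lie_mder (G : aff R n -> Prop) X : lie_alg G X -> exists c : R -> aff R n,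
  (forall t, G (c t)) /\ c 0 = aff_id R n /\ mder (fun t => (c t).1) X.1 /\
  mder (fun t => (c t).2) X.2.
Proof.
move=> [c [hG [h0 [h1 h2]]]]; exists c; do 3!(split=> //).
by move=> i j; rewrite (ord1 j); exact: h2.
Qed.

Lemma lie_skew (S : 'M[R]_n) (G : aff R n -> Prop) X :
  (forall g, G g -> iso S g) -> lie_alg G X -> X.1^T *m S + S *m X.1 = 0.
Proof.
move=> hI /lie_mder [c [hG [h0 [h1 h2]]]].
have d1 := mder_mul (mder_mul (mder_tr h1) (mder_cst S)) h1.
have d2 : mder (fun t => (c t).1^T *m S *m (c t).1) 0.
  apply: mder_ext (mder_cst S) => t; by rewrite (hI _ (hG t)).
have := mder_uniq d1 d2.
by rewrite h0 /aff_id /= trmx1 mulmx0 addr0 mulmx1 mul1mx.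
Qed.

Lemma lie_comm (G : aff R n -> Prop) X (h : aff R n) :
  (forall g, G g -> aff_mul h g = aff_mul g h) -> lie_alg G X ->
  h.1 *m X.1 = X.1 *m h.1 /\ h.1 *m X.2 = X.1 *m h.2 + X.2.
Proof.
move=> hc /lie_mder [c [hG [h0 [h1 h2]]]].
have e t := hc _ (hG t).
split.
  have d1 := mder_mul (mder_cst h.1) h1.
  have d2 := mder_mul h1 (mder_cst h.1).
  have d1' : mder (fun t => (c t).1 *m h.1) (0 *m (c 0).1 + h.1 *m X.1).
    by apply: mder_ext d1 => t; have := congr1 fst (e t).
  have := mder_uniq d1' d2.
  by rewrite mul0mx add0r mulmx0 addr0.
have d1 := mder_add (mder_mul (mder_cst h.1) h2) (mder_cst h.2).
have d2 := mder_add (mder_mul h1 (mder_cst h.2)) h2.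
have d1' : mder (fun t => (c t).1 *m h.2 + (c t).2) (0 *m (c 0).2 + h.1 *m X.2 + 0).
  by apply: mder_ext d1 => t; have := congr1 snd (e t).
have := mder_uniq d1' d2.
by rewrite mul0mx add0r addr0 mulmx0 addr0.
Qed.

End Lie.

Section Alg.
Variables (R : realType) (n : nat) (S : 'M[R]_n).
Local Notation b := (bform S).

Lemma bfDl u v w : b (u + v) w = b u w + b v w.
Proof. by rewrite /bform linearD /= !mulmxDl mxE. Qed.
Lemma bfDr u v w : b w (u + v) = b w u + b w v.
Proof. by rewrite /bform !mulmxDr mxE. Qed.
Lemma bfNl u w : b (- u) w = - b u w.
Proof. by rewrite /bform linearN /= !mulNmx mxE. Qed.
Lemma bfNr u w : b w (- u) = - b w u.
Proof. by rewrite /bform !mulmxN mxE. Qed.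
Lemma bfZr a u w : b w (a *: u) = a * b w u.
Proof. by rewrite /bform -scalemxAr mxE. Qed.
Lemma bfBl u v w : b (u - v) w = b u w - b v w.
Proof. by rewrite bfDl bfNl. Qed.
Lemma bfBr u v w : b w (u - v) = b w u - b w v.
Proof. by rewrite bfDr bfNr. Qed.

Lemma bf_sym u v : S^T = S -> b u v = b v u.
Proof.
move=> hS; rewrite /bform -[in LHS](trmxK (u^T *m S *m v)) [in LHS]mxE.
by rewrite !trmx_mul trmxK hS mulmxA.
Qed.

Lemma bf_skew (A : 'M[R]_n) u v : A^T *m S + S *m A = 0 ->
  b (A *m u) v = - b u (A *m v).
Proof.
move=> /eqP; rewrite addr_eq0 => /eqP hA.
by rewrite /bform trmx_mul -(mulmxA u^T) hA mulmxN mulNmx !mulmxA mxE.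
Qed.

Lemma bf_iso (h : 'M[R]_n) u v : h^T *m S *m h = S -> b (h *m u) (h *m v) = b u v.
Proof.
move=> hh; rewrite /bform trmx_mul -!mulmxA (mulmxA h^T) (mulmxA (h^T *m S)).
by rewrite hh !mulmxA.
Qed.

Lemma lin_quad (A B : 'M[R]_n) u v :
  (forall d, b (A *m d + u) (B *m d + v) = b u v) ->
  forall d, b (A *m d) (B *m d) = 0 /\ b u (B *m d) + b (A *m d) v = 0.
Proof.
move=> H d; have h1 := H d; have h2 := H (- d).
move: h1 h2; rewrite !mulmxN !bfDl !bfDr !bfNl !bfNr opprK => h1 h2.
split; lra.
Qed.

End Alg.

Section Comm.
Variables (R : realType) (n : nat).
Definition Comm (h U : aff R n) :=
  h.1 *m U.1 = U.1 *m h.1 /\ h.1 *m U.2 = U.1 *m h.2 + U.2.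

Lemma comm_bracket h U V : Comm h U -> Comm h V -> Comm h (lie_bracket U V).
Proof.
move=> [u1 u2] [v1 v2]; split => /=.
  have cm (A B : 'M[R]_n) : h.1 *m A = A *m h.1 -> h.1 *m B = B *m h.1 ->
    h.1 *m (A *m B) = (A *m B) *m h.1.
    by move=> hA hB; rewrite mulmxA hA -mulmxA hB mulmxA.
  by rewrite mulmxBr mulmxBl (cm _ _ u1 v1) (cm _ _ v1 u1).
rewrite mulmxBr !mulmxA u1 v1 -!mulmxA u2 v2 mulmxDr mulmxDr mulmxBl !mulmxA.
by rewrite opprD addrACA.
Qed.
End Comm.

Theorem lemma4p9 (R : realType) (n s : nat) (S : 'M[R]_n) (G : aff R n -> Prop)
  (hS : signature_form S s)
  (hG : subgroup_of_iso S G) (hZ : zariski_closed G)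
  (hC : centralizer_transitive S G)
  (p : 'cV[R]_n) (X Y : aff R n) (hX : lie_alg G X) (hY : lie_alg G Y) :
  let Z := lie_bracket X Y in
  forall a b c : R,
    orbit_form S p Z (aff_add (aff_add (aff_scale a X) (aff_scale b Y)) (aff_scale c Z)) = 0.
Proof.
move=> Z a b c.
have [_ [hSs _]] := hS.
have [hI _] := hG.
have skX := lie_skew hI hX; have skY := lie_skew hI hY.
have move_pt (d : 'cV[R]_n) : exists h : aff R n, iso S h /\ h.2 = d /\
    Comm h X /\ Comm h Y.
  have [h [ih [ch ad]]] := hC 0 d.
  exists h; split=> //; split; first by move: ad; rewrite /aff_act mulmx0 add0r.
  by split; apply: lie_comm ch _.
have actC (h U : aff R n) : Comm h U -> aff_act U h.2 = h.1 *m U.2.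
  by move=> [_ ->].
have const (U V : aff R n) : (forall h : aff R n, Comm h X -> Comm h Y -> Comm h U /\ Comm h V) ->
    forall d, bform S (U.1 *m d + U.2) (V.1 *m d + V.2) = bform S U.2 V.2.
  move=> hUV d; have [h [ih [hd [cX cY]]]] := move_pt d.
  have [cU cV] := hUV h cX cY.
  have := actC _ _ cU; have := actC _ _ cV; rewrite /aff_act hd => -> ->.
  by rewrite bf_iso.
have LQ (U V : aff R n) : (forall h : aff R n, Comm h X -> Comm h Y -> Comm h U /\ Comm h V) ->
    forall d, bform S (U.1 *m d) (V.1 *m d) = 0 /\
      bform S U.2 (V.1 *m d) + bform S (U.1 *m d) V.2 = 0.
  by move=> hUV; apply: lin_quad; apply: const.
have [QXX LXX] := LQ X X (fun h cX cY => conj cX cX) X.2.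
have [_ LYY] := LQ Y Y (fun h cX cY => conj cY cY) X.2.
have [QYY _] := LQ Y Y (fun h cX cY => conj cY cY) X.2.
have [QXX' LXX'] := LQ X X (fun h cX cY => conj cX cX) Y.2.
have [_ LXY] := LQ X Y (fun h cX cY => conj cX cY) (X.1 *m Y.2).
have [h [ih [hp [cX cY]]]] := move_pt p.
have cZ := comm_bracket cX cY.
rewrite /orbit_form -hp.
have -> : aff_act (aff_add (aff_add (aff_scale a X) (aff_scale b Y)) (aff_scale c Z)) h.2
   = h.1 *m (a *: X.2 + b *: Y.2 + c *: Z.2).
  rewrite !mulmxDr -!scalemxAr -(actC _ _ cX) -(actC _ _ cY) -(actC _ _ cZ).
  rewrite /aff_act /= !mulmxDl -!scalemxAl !scalerDr.
  rewrite mulmxBl mulNmx; apply/matrixP => i j; rewrite !mxE; ring.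
rewrite actC // bf_iso // !bfDr !bfZr.
have -> : Z.2 = X.1 *m Y.2 - Y.1 *m X.2 by [].
rewrite !bfBl !bfBr.
set x := X.2 in LXX LYY QYY LXY *; set y := Y.2 in LXX' QXX' LXY *.
have s1 := bf_sym x (X.1 *m y) hSs.
have s2 := bf_sym x (Y.1 *m x) hSs.
have s3 := bf_sym y (X.1 *m y) hSs.
have s4 := bf_sym y (Y.1 *m x) hSs.
have s5 := bf_sym (Y.1 *m x) (X.1 *m y) hSs.
have k1 := bf_skew x x skY.
have k2 := bf_skew y y skX.
have k3 := bf_skew x (X.1 *m y) skY.
have k4 := bf_skew (X.1 *m y) y skX.
rewrite -/x in LXX'.
have e1 : bform S (X.1 *m y) x - bform S (Y.1 *m x) x = 0 by lra.
have e2 : bform S (X.1 *m y) y - bform S (Y.1 *m x) y = 0 by lra.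
have e3 : bform S (X.1 *m y) (X.1 *m y) - bform S (X.1 *m y) (Y.1 *m x) -
   (bform S (Y.1 *m x) (X.1 *m y) - bform S (Y.1 *m x) (Y.1 *m x)) = 0 by lra.
by rewrite e1 e2 e3 !mulr0 !addr0.
Qed.
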